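(* Let $V$ be a poset, $m$ a maximal node of positive height, and let $U$ be a splitting of $V$ at $m$ with splitting map $\varphi$ and associated set $\mathcal M=\varphi^{-1}(m)$. Then $d_{L_U(n)}(n)=d_{L_V(\varphi(n))}(\varphi(n))$ for every node $n\in U\setminus\mathcal M$ of positive height.
   Context: For a poset $W$: $L_W(u)=\{v\le u\}$, $G(u)=\{v\ge u\}$; height of $u$ is the supremum of lengths of chains in $L(u)$; $H_1$ = height-one nodes; $\mathcal H_W$ = minimal nodes together with height-one nodes dominating at least two minimal nodes. For a poset $W$ with single maximal node $n$ and dimension $\ge1$: $\mathcal H_W^*=\mathcal H_W\setminus\{n\}$; $\Lambda_W$ = $(H_1\cap\mathcal H_W^* )$ together with all $v\in\mathcal H_W^*$ with $G(v)\cap H_1\cap\mathcal H_W^*=\emptyset$; $d_W(n)=|\Lambda_W|$. Splitting: $U$ is a splitting of $V$ at $m$ via $\varphi:U\to V$ if $\varphi$ is surjective order-preserving, there is a finite nonempty $\mathcal M\subseteq\max U$ of positive-height nodes with $\varphi^{-1}(m)=\mathcal M$, $|\varphi^{-1}(v)|=1$ for $v\ne m$, and whenever $\varphi(x')=x\le y$ there is $y'\ge x'$ with $\varphi(y')=y$. *)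

(* Defs.v *)
From HB Require Import structures.
From mathcomp Require Import all_boot all_order.
From mathcomp Require Import boolp classical_sets cardinality.
Set Implicit Arguments. Unset Strict Implicit. Unset Printing Implicit Defensive.
Import Order.TTheory.
Local Open Scope classical_set_scope.
Local Open Scope order_scope.

Section PosetDefs.
Context {disp : Order.disp_t} {T : porderType disp}.

(* A (sub)poset is given by a carrier W : set T with the induced order. *)
Definition Ldown (W : set T) (u : T) : set T := [set v | W v /\ v <= u].
Definition Gup (W : set T) (u : T) : set T := [set v | W v /\ u <= v].

Definition chain_in_L (W : set T) (u : T) (k : nat) : Prop :=
  exists s : nat -> T,
    (forall i, (i <= k)%N -> Ldown W u (s i)) /\
    (forall i, (i < k)%N -> s i < s i.+1).

(* height of u (sup of chain lengths in L_W(u)) is >= k *)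
Definition height_ge (W : set T) (u : T) (k : nat) : Prop := chain_in_L W u k.
Definition pos_height (W : set T) (u : T) : Prop := W u /\ height_ge W u 1.
Definition height_one (W : set T) (u : T) : Prop :=
  W u /\ height_ge W u 1 /\ ~ height_ge W u 2.

Definition minimal_node (W : set T) (u : T) : Prop :=
  W u /\ forall v, W v -> v <= u -> v = u.
Definition maximal_node (W : set T) (u : T) : Prop :=
  W u /\ forall v, W v -> u <= v -> v = u.

Definition H1 (W : set T) : set T := [set u | height_one W u].
Definition HH (W : set T) : set T :=
  [set u | minimal_node W u] `|`
  [set u | height_one W u /\ exists a b, a <> b /\ minimal_node W a /\
             minimal_node W b /\ a <= u /\ b <= u].
(* \mathcal H_W^* for W with single maximal node n *)
Definition HHstar (W : set T) (n : T) : set T := HH W `\` [set n].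
(* \Lambda_W ; d_W(n) = |Lambda W n| *)
Definition Lambda (W : set T) (n : T) : set T :=
  (H1 W `&` HHstar W n) `|`
  [set v | HHstar W n v /\ (Gup W v `&` H1 W `&` HHstar W n) = set0].

End PosetDefs.

(* U (whole type) is a splitting of V (whole type) at m via phi, with
   associated set M = phi^-1(m). *)
Definition splitting {d1 d2 : Order.disp_t} {U : porderType d1}
    {V : porderType d2} (phi : U -> V) (m : V) (M : set U) : Prop :=
  (forall v : V, exists u : U, phi u = v) /\
  (forall x y : U, x <= y -> phi x <= phi y) /\
  [/\ 
      [/\ finite_set M, M !=set0,
          (forall x, M x -> maximal_node setT x) &
          (forall x, M x -> pos_height setT x)],
      (forall x : U, phi x = m <-> M x),
      (forall v : V, v <> m -> exists! u : U, phi u = v) &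
      (forall (x' : U) (y : V), phi x' <= y ->
         exists y' : U, x' <= y' /\ phi y' = y)].

(* Main.v *)
Require Import Defs.
From mathcomp Require Import all_boot all_order.
From mathcomp Require Import boolp classical_sets cardinality.
Set Implicit Arguments. Unset Strict Implicit. Unset Printing Implicit Defensive.
Import Order.TTheory.
Local Open Scope classical_set_scope.
Local Open Scope order_scope.

Section Iso.
Context {d1 d2 : Order.disp_t} {T : porderType d1} {T' : porderType d2}.

Record iso (W : set T) (W' : set T') (f : T -> T') (g : T' -> T) : Prop := Iso {
  isoW : forall x, W x -> W' (f x);
  isoW' : forall y, W' y -> W (g y);
  isogf : forall x, W x -> g (f x) = x;
  isofg : forall y, W' y -> f (g y) = y;
  isole : forall x y, W x -> W y -> x <= y -> f x <= f y;
  isole' : forall x y, W' x -> W' y -> x <= y -> g x <= g y }.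

End Iso.

Lemma iso_sym {d1 d2 : Order.disp_t} {T : porderType d1} {T' : porderType d2}
  (W : set T) (W' : set T') f g : iso W W' f g -> iso W' W g f.
Proof. by case=> *; constructor. Qed.

Section Transport.
Context {d1 d2 : Order.disp_t} {T : porderType d1} {T' : porderType d2}.
Variables (W : set T) (W' : set T') (f : T -> T') (g : T' -> T).
Hypothesis I : iso W W' f g.

Lemma iso_inj x y : W x -> W y -> f x = f y -> x = y.
Proof. by move=> Wx Wy e; rewrite -(isogf I Wx) e (isogf I Wy). Qed.

Lemma iso_lt x y : W x -> W y -> x < y -> f x < f y.
Proof.
move=> Wx Wy; rewrite !lt_def => /andP[ne le]; apply/andP; split.
  apply/eqP => e; move/eqP: ne; apply; exact: (iso_inj Wy Wx e).
exact: (isole I).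
Qed.

Lemma tr_chain u k : W u -> chain_in_L W u k -> chain_in_L W' (f u) k.
Proof.
move=> Wu [s [hs hl]]; exists (f \o s); split.
  move=> i /hs [Ws le]; split; [exact: (isoW I) | exact: (isole I)].
move=> i ik; have [Wi _] := hs i (ltnW ik); have [Wj _] := hs i.+1 ik.
by apply: iso_lt => //; apply: hl.
Qed.

Lemma tr_minimal u : minimal_node W u -> minimal_node W' (f u).
Proof.
move=> [Wu hm]; split; first exact: (isoW I).
move=> v Wv le; have Wg := isoW' I Wv.
have := isole' I Wv (isoW I Wu) le; rewrite (isogf I Wu) => le'.
by rewrite -(isofg I Wv) (hm _ Wg le').
Qed.
End Transport.

Section Transport2.
Context {d1 d2 : Order.disp_t} {T : porderType d1} {T' : porderType d2}.
Variables (W : set T) (W' : set T') (f : T -> T') (g : T' -> T).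
Hypothesis I : iso W W' f g.

Lemma tr_height_one u : height_one W u -> height_one W' (f u).
Proof.
move=> [Wu [h1 nh2]]; split; first exact: (isoW I).
split; first exact: (tr_chain I).
move=> h2; apply: nh2; have := tr_chain (iso_sym I) (isoW I Wu) h2.
by rewrite (isogf I Wu).
Qed.

Lemma tr_HH u : HH W u -> HH W' (f u).
Proof.
case=> [hm|[h1 [a [b [ab [ma [mb [au bu]]]]]]]]; [left; exact: (tr_minimal I)|].
right; split; first exact: tr_height_one.
have Wu := h1.1.
exists (f a), (f b); split.
  by move=> e; apply: ab; apply: (iso_inj I ma.1 mb.1 e).
split; first exact: (tr_minimal I).
split; first exact: (tr_minimal I).
split; [exact: (isole I ma.1 Wu au) | exact: (isole I mb.1 Wu bu)].
Qed.

Lemma HH_W u : HH W u -> W u.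
Proof. by case=> [[]|[[]]]. Qed.

Lemma tr_HHstar n u : W n -> HHstar W n u -> HHstar W' (f n) (f u).
Proof.
move=> Wn [hh ne]; split; first exact: tr_HH.
move=> /= e; apply: ne => /=; exact: (iso_inj I (HH_W hh) Wn e).
Qed.

Lemma tr_Gup v x : W v -> Gup W v x -> Gup W' (f v) (f x).
Proof. move=> Wv [Wx le]; split; [exact: (isoW I) | exact: (isole I)]. Qed.
End Transport2.

Lemma tr_Lambda {d1 d2 : Order.disp_t} {T : porderType d1} {T' : porderType d2}
  (W : set T) (W' : set T') f g n x : iso W W' f g -> W n ->
  Lambda W n x -> Lambda W' (f n) (f x).
Proof.
move=> I Wn [[h1 hs]|[hs he]].
  left; split; [exact: (tr_height_one I) | exact: (tr_HHstar I Wn)].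
right; split; first exact: (tr_HHstar I Wn).
have Wx := HH_W hs.1.
apply/seteqP; split => // y [[gy hy] hsy]; exfalso.
have Wy := gy.1.
have := tr_Gup (iso_sym I) (isoW I Wx) gy.
have := tr_height_one (iso_sym I) hy.
have := tr_HHstar (iso_sym I) (isoW I Wn) hsy.
rewrite (isogf I Wx) (isogf I Wn) => a b c.
have : (Gup W x `&` H1 W `&` HHstar W n) (g y) by split; [split|].
by rewrite he.
Qed.

Lemma Lambda_W {d1 : Order.disp_t} {T : porderType d1} (W : set T) n x :
  Lambda W n x -> W x.
Proof. by case=> [[[Wx _] _]|[[hh _] _]] //; exact: HH_W hh. Qed.

Lemma Lambda_image {d1 d2 : Order.disp_t} {T : porderType d1} {T' : porderType d2}
  (W : set T) (W' : set T') f g n : iso W W' f g -> W n ->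
  Lambda W' (f n) = f @` Lambda W n.
Proof.
move=> I Wn; apply/seteqP; split => y.
  move=> hy; have Wy := Lambda_W hy.
  have := tr_Lambda (iso_sym I) (isoW I Wn) hy; rewrite (isogf I Wn) => h.
  by exists (g y) => //; rewrite (isofg I Wy).
by case=> x hx <-; exact: (tr_Lambda I Wn).
Qed.

Theorem lemma5p5 (d1 d2 : Order.disp_t) (U : porderType d1) (V : porderType d2)
    (m : V) (phi : U -> V) (M : set U) :
  maximal_node setT m -> pos_height setT m ->
  splitting phi m M ->
  forall n : U, ~ M n -> pos_height setT n ->
  card_eq (Lambda (Ldown setT n) n) (Lambda (Ldown setT (phi n)) (phi n)).
Proof.
move=> [_ mmax] _ [_ [mono [[_ _ Mmax _] hM huniq hlift]]] n nM _.
have pn : phi n <> m by move/hM.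
have uniq_eq : forall a b, phi a = phi b -> phi b <> m -> a = b.
  move=> a b e ne; have [u [_ hu]] := huniq _ ne.
  by rewrite -(hu a e) (hu b).
have below : forall w, w <= phi n -> exists u, u <= n /\ phi u = w.
  move=> w le.
  have wm : w <> m by move=> e; apply: pn; apply: mmax => //; rewrite -e.
  have [u [ew _]] := huniq _ wm; subst w.
  have [y' [uy e]] := hlift u (phi n) le.
  by exists u; split => //; rewrite -(uniq_eq _ _ e pn).
pose W := Ldown (@setT U) n.
pose W' := Ldown (@setT V) (phi n).
have [g hg] : {g : V -> U & forall w, W' w -> W (g w) /\ phi (g w) = w}.
  apply: (@choice V U (fun w u => W' w -> W u /\ phi u = w)) => w.
  case: (pselect (W' w)) => [[_ le]|nw]; last by exists n.
  by have [u [un e]] := below w le; exists u => _; split.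
have notm : forall x, W x -> phi x <> m.
  move=> x [_ xn] e; apply: nM; apply/hM.
  have Mx : M x by apply/hM.
  by rewrite ((Mmax x Mx).2 n I xn).
have I : iso W W' phi g.
  constructor.
  - by move=> x [_ le]; split => //; exact: mono.
  - by move=> y /hg [].
  - move=> x Wx; have W'x : W' (phi x) by split => //; apply: mono; case: Wx.
    by have [_ e] := hg _ W'x; apply: (uniq_eq _ _ e (notm _ Wx)).
  - by move=> y /hg [].
  - by move=> x y _ _; exact: mono.
  - move=> x y Wx Wy le.
    have [Wgx ex] := hg _ Wx; have [Wgy ey] := hg _ Wy.
    rewrite -{}ex -{}ey in le.
    have [y' [le' e]] := hlift _ _ le.
    by rewrite (uniq_eq _ _ e (notm _ Wgy)) in le'.
have Wn : W n by split.
rewrite (Lambda_image I Wn) card_eq_sym.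
apply: inj_card_eq => x y hx hy e.
exact: (iso_inj I (Lambda_W (set_mem hx)) (Lambda_W (set_mem hy)) e).
Qed.
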